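(* Let $t$ be a positive integer, let $\overline{\mathcal{G}}_t$, $\overline{\mathcal{P}}_t$ and $\phi:\overline{\mathcal{G}}_t\to\overline{\mathcal{P}}_t$ be as described in the context, and let $\mu\in\overline{\mathcal{P}}_t$. (i) If $\ell(\mu)=m(\mu)$, then $\mu$ has exactly $2m(\mu)$ pre-images in $\overline{\mathcal{G}}_t$ under $\phi$; of these, exactly $m(\mu)$ have no overlined parts, and the other $m(\mu)$ have the first occurrence of the smallest part overlined. (ii) If $\ell(\mu)>m(\mu)$, then $\mu$ has exactly $2m(\mu)+1$ pre-images in $\overline{\mathcal{G}}_t$ under $\phi$; of these, exactly $m(\mu)+1$ have the same number of overlined parts as $\mu$, and the other $m(\mu)$ have exactly one more overlined part than $\mu$.
   Context: An overpartition is a partition (weakly decreasing sequence of positive integers) in which the first occurrence of each distinct part size may be overlined; an overlined part $\overline{a}$ has size $a$. $\ell(\lambda)$ is the number of parts of $\lambda$; for $\mu\in\overline{\mathcal{P}}_t$, $m(\mu)$ is the number of parts of $\mu$ equal to $t$. $\overline{\mathcal{G}}_t$ is the set of nonempty overpartitions whose largest and smallest parts differ by at most $t$, with the largest part not overlined whenever this difference is exactly $t$. $\overline{\mathcal{P}}_t$ is the set of nonempty overpartitions with all parts at most $t$ and no part equal to $t$ overlined. For $\pi=(\pi_1,\dots,\pi_\ell)\in\overline{\mathcal{G}}_t$, let $s=\lfloor \pi_\ell/t\rfloor$ and let $k$ be the positive integer with $\pi_k\ge (s+1)t>\pi_{k+1}$ if it exists, $k=0$ otherwise; then $\phi(\pi)$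 is the overpartition $(t,\dots,t,\ \pi_{k+1}-st,\dots,\pi_\ell-st,\ \pi_1-(s+1)t,\dots,\pi_k-(s+1)t)$ with exactly $s(\ell-k)+(s+1)k$ initial non-overlined parts equal to $t$, where each $\pi_i-st$ or $\pi_i-(s+1)t$ is overlined exactly when $\pi_i$ is, and all parts equal to $0$ are deleted. (This $\phi(\pi)$ lies in $\overline{\mathcal{P}}_t$.) *)

(* Defs.v *)
From mathcomp Require Import all_boot.
Set Implicit Arguments. Unset Strict Implicit. Unset Printing Implicit Defensive.

(* An overpartition is encoded as a list of parts (a, b) : nat * bool, listed in
   weakly decreasing order of size a; b = true means the part is overlined.
   Only the first occurrence of each distinct size may be overlined. *)
Definition opart := (nat * bool)%type.

Definition op_rel (x y : opart) : bool :=
  (y.1 <= x.1) && ((x.1 == y.1) ==> ~~ y.2).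

Definition is_overpartition (p : seq opart) : bool :=
  all (fun x => 0 < x.1) p && pairwise op_rel p.

Definition n_over (p : seq opart) : nat := count (fun x => x.2) p.

Definition mult_t (t : nat) (mu : seq opart) : nat := count (fun x => x.1 == t) mu.

Definition largest (p : seq opart) : nat := (head (0, false) p).1.
Definition smallest (p : seq opart) : nat := (last (0, false) p).1.

Definition in_Pt (t : nat) (mu : seq opart) : bool :=
  [&& is_overpartition mu, mu != [::],
      all (fun x => x.1 <= t) mu & all (fun x => (x.1 == t) ==> ~~ x.2) mu].

Definition in_Gt (t : nat) (p : seq opart) : bool :=
  [&& is_overpartition p, p != [::],
      largest p - smallest p <= t &
      (largest p - smallest p == t) ==> ~~ (head (0, false) p).2].

Definition phi (t : nat) (p : seq opart) : seq opart :=
  let s := smallest p %/ t in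
  let k := count (fun x => (s.+1) * t <= x.1) p in
  let l := size p in
  nseq (s * (l - k) + s.+1 * k) (t, false) ++
  filter (fun x => x.1 != 0)
    (map (fun x => (x.1 - s * t, x.2)) (drop k p) ++
     map (fun x => (x.1 - s.+1 * t, x.2)) (take k p)).

Definition smallest_overlined (p : seq opart) : bool :=
  has (fun x => (x.1 == smallest p) && x.2) p.

(* Main.v *)
Require Import Defs.
From mathcomp Require Import all_boot.
From mathcomp Require Import zify.
Set Implicit Arguments. Unset Strict Implicit. Unset Printing Implicit Defensive.

Lemma divmod_uniq s n k : k < n -> (s * n + k) %/ n = s /\ (s * n + k) %% n = k.
Proof.
move=> kn; have n0 : 0 < n by lia.
split; first by rewrite divnMDl // divn_small // addn0.
by rewrite modnMDl modn_small.
Qed.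

Lemma op_rel_le x y : op_rel x y -> y.1 <= x.1.
Proof. by case/andP. Qed.

Lemma pw_head_ge x s : pairwise op_rel (x :: s) -> forall y, y \in s -> y.1 <= x.1.
Proof. by rewrite pairwise_cons => /andP[/allP H _] y /H /op_rel_le. Qed.

Lemma pw_last_le x s : pairwise op_rel (x :: s) -> forall y, y \in x :: s -> (last x s).1 <= y.1.
Proof.
elim: s x => [|z s IH] x.
  by move=> _ y; rewrite inE => /eqP->.
move=> H y; rewrite [last _ _]/=; rewrite inE => /orP[/eqP->|Hy].
  have Hl : last z s \in z :: s by apply: mem_last.
  exact: (pw_head_ge H Hl).
apply: IH => //; move: H; rewrite pairwise_cons => /andP[_ ->] //.
Qed.

Lemma take_count_split c p : pairwise op_rel p ->
  all (fun x => c <= x.1) (take (count (fun x => c <= x.1) p) p) /\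
  all (fun x => x.1 < c) (drop (count (fun x => c <= x.1) p) p).
Proof.
elim: p => [|x p IH] // H.
have H' : pairwise op_rel p by move: H; rewrite pairwise_cons => /andP[].
case: (leqP c x.1) => Hc /=.
  by rewrite /= Hc /= add0n Hc /=; apply: IH.
have Hc' : (c <= x.1) = false by lia.
have -> : count (fun x => c <= x.1) p = 0.
  apply/eqP; rewrite -leqn0 leqNgt -has_count; apply/hasP => -[y Hy Hcy].
  move: Hcy => /= Hcy; have := leq_trans Hcy (pw_head_ge H Hy); by rewrite leqNgt Hc.
rewrite Hc' /= Hc /=; split => //; apply/allP => y Hy.
have := leq_ltn_trans (pw_head_ge H Hy) Hc; done.
Qed.

Definition shiftp (c : nat) (x : opart) : opart := (x.1 + c, x.2).
Definition unshiftp (c : nat) (x : opart) : opart := (x.1 - c, x.2).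
Definition build (t : nat) (R : seq opart) (k s : nat) : seq opart :=
  map (shiftp (s.+1 * t)) (drop (size R - k) R) ++
  map (shiftp (s * t)) (take (size R - k) R).

Lemma size_build t R k s : size (build t R k s) = size R.
Proof. by rewrite /build size_cat !size_map addnC -size_cat cat_take_drop. Qed.

Lemma unshiftpK c : cancel (shiftp c) (unshiftp c).
Proof. by case=> a b; rewrite /shiftp /unshiftp /= addnK. Qed.

Lemma map_unshift_shift c l : [seq (x.1 - c, x.2) | x <- map (shiftp c) l] = l.
Proof. by rewrite -map_comp (eq_map (unshiftpK c)) map_id. Qed.

Lemma smallest_build t R k s : k < size R ->
  exists2 y, y \in take (size R - k) R & smallest (build t R k s) = y.1 + s * t.
Proof.
move=> kN; rewrite /smallest /build.
have : 0 < size (take (size R - k) R) by rewrite size_take; case: ifP; lia.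
case: (take _ R) => [|y ys] //= _.
exists (last y ys); first exact: mem_last.
by rewrite last_cat /= (last_map (shiftp (s * t))).
Qed.

Lemma phi_build t R k s : 0 < t -> k < size R -> all (fun x => x.1 < t) R ->
  phi t (build t R k s) = nseq (s * size R + k) (t, false) ++ filter (fun x => x.1 != 0) R.
Proof.
move=> t0 kN /allP Rt.
have [y Hy Hsm] := smallest_build t s kN.
have Hyt : y.1 < t by apply: Rt; exact: mem_take Hy.
have Hdiv : smallest (build t R k s) %/ t = s.
  by rewrite Hsm addnC divnMDl // divn_small // addn0.
have Hsd : size (map (shiftp (s.+1 * t)) (drop (size R - k) R)) = k.
  by rewrite size_map size_drop subKn // ltnW.
have Hcnt : count (fun x => s.+1 * t <= x.1) (build t R k s) = k.
  rewrite /build count_cat !count_map.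
  rewrite (eq_count (a2 := predT)); last by move=> x /=; rewrite /shiftp /= leq_addl.
  rewrite count_predT size_drop.
  rewrite (eq_in_count (a2 := pred0)); last first.
    move=> x /mem_take /Rt; case: x => a b /= Ha; rewrite /shiftp /=.
    apply/negbTE; rewrite -ltnNge mulSn; lia.
  by rewrite count_pred0 addn0 subKn // ltnW.
have Hdr : drop k (build t R k s) = map (shiftp (s * t)) (take (size R - k) R).
  by rewrite /build -{1}Hsd drop_size_cat.
have Htk : take k (build t R k s) = map (shiftp (s.+1 * t)) (drop (size R - k) R).
  by rewrite /build -{1}Hsd take_size_cat.
rewrite /phi Hdiv Hcnt size_build Hdr Htk !map_unshift_shift cat_take_drop.
congr (nseq _ _ ++ _); by rewrite mulSn addnCA -mulnDr subnK ?(ltnW kN) // addnC.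
Qed.

Lemma op_rel_shift c x y : op_rel (shiftp c x) (shiftp c y) = op_rel x y.
Proof. by case: x => a b; case: y => a' b'; rewrite /op_rel /shiftp /= leq_add2r eqn_add2r. Qed.

Lemma pairwise_shift c l : pairwise op_rel (map (shiftp c) l) = pairwise op_rel l.
Proof. by rewrite pairwise_map; apply: eq_pairwise => x y /=; rewrite op_rel_shift. Qed.

Lemma pairwise_take_drop n (l : seq opart) : pairwise op_rel l ->
  [/\ allrel op_rel (take n l) (drop n l), pairwise op_rel (take n l) & pairwise op_rel (drop n l)].
Proof. by rewrite -{1}(cat_take_drop n l) pairwise_cat => /and3P. Qed.

Lemma inGt_build t R k s : 0 < t -> k < size R -> all (fun x => x.1 < t) R ->
  pairwise op_rel R ->
  (0 < s) || all (fun x => 0 < x.1) (take (size R - k) R) -> in_Gt t (build t R k s).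
Proof.
move=> t0 kN /allP Rt HR Hpos.
have [Hrel Hpt Hpd] := pairwise_take_drop (size R - k) HR.
have Hne : 0 < size (take (size R - k) R) by rewrite size_take; case: ifP; lia.
have H34 : (largest (build t R k s) - smallest (build t R k s) <= t) &&
  ((largest (build t R k s) - smallest (build t R k s) == t) ==> ~~ (head (0, false) (build t R k s)).2).
  move: Hne Hrel; rewrite /build /largest /smallest.
  case Htk: (take (size R - k) R) => [|y ys] //= _.
  have Hl : last y ys \in take (size R - k) R by rewrite Htk mem_last.
  have Hlt : (last y ys).1 < t by apply: Rt; exact: mem_take Hl.
  have Hy : y \in take (size R - k) R by rewrite Htk mem_head.
  have Hyt : y.1 < t by apply: Rt; exact: mem_take Hy.
  rewrite last_cat /= (last_map (shiftp (s * t))).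
  case Hdr: (drop (size R - k) R) => [|x xs] /= Hrel.
    have H1 : y.1 + s * t - ((last y ys).1 + s * t) < t.
      by rewrite subnDr; exact: leq_ltn_trans (leq_subr _ _) Hyt.
    by rewrite (ltnW H1) (ltn_eqF H1).
  have : op_rel (last y ys) x.
    by move/allrelP: Hrel; apply; [exact: mem_last | exact: mem_head].
  move: Hlt; case: (last y ys) => a b; case: x {Hdr Hrel} => a' b' /= Ha.
  rewrite /op_rel /= mulSn => /andP[H1 H2].
  apply/andP; split; first lia.
  apply/implyP => /eqP Heq.
  have Ea : a == a' by apply/eqP; lia.
  by move/implyP: H2; apply.
rewrite /in_Gt /is_overpartition.
apply/and4P; split.
- apply/andP; split.
    rewrite /build all_cat !all_map; apply/andP; split.
      by apply/allP => x _ /=; rewrite /shiftp /= addn_gt0 muln_gt0 t0 orbT.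
    case/orP: Hpos => [s0|/allP Hp]; apply/allP => x Hx /=; rewrite /shiftp /= addn_gt0.
      by rewrite muln_gt0 s0 t0 orbT.
    by rewrite Hp.
  rewrite /build pairwise_cat !pairwise_shift Hpt Hpd !andbT.
  apply/allrelP => x' y' /mapP[x Hx ->] /mapP[y Hy ->].
  have Hyt : y.1 < t by apply: Rt; exact: mem_take Hy.
  move: Hyt; case: y {Hy} => a b; case: x {Hx} => a' b' /= Hyt.
  rewrite /op_rel /shiftp /= mulSn.
  apply/andP; split; first lia.
  apply/implyP => /eqP; lia.
- by rewrite -size_eq0 size_build -lt0n; exact: leq_ltn_trans (leq0n k) kN.
- by case/andP: H34.
- by case/andP: H34.
Qed.

Lemma op_rel_unshift c x y : c <= x.1 -> c <= y.1 ->
  op_rel (unshiftp c x) (unshiftp c y) = op_rel x y.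
Proof.
case: x => a b; case: y => a' b' /= Ha Ha'; rewrite /op_rel /unshiftp /=.
by rewrite leq_sub2rE // eqn_sub2rE.
Qed.

Lemma pairwise_unshift c l : all (fun x => c <= x.1) l -> pairwise op_rel l ->
  pairwise op_rel (map (unshiftp c) l).
Proof.
move=> Hl Hp; rewrite pairwise_map; apply: (sub_in_pairwise _ Hl Hp).
by move=> x y Hx Hy /=; rewrite op_rel_unshift.
Qed.

Lemma shift_unshift_map c l : all (fun x => c <= x.1) l ->
  map (shiftp c) (map (unshiftp c) l) = l.
Proof.
move=> /allP Hl; rewrite -map_comp -[RHS]map_id; apply/eq_in_map => x /Hl.
by case: x => a b /= Ha; rewrite /shiftp /unshiftp /= subnK.
Qed.

Lemma arith1 c t st xa : 0 < t -> c = t + st -> xa < c -> xa - st < t.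
Proof. lia. Qed.
Lemma arith2 c t st a ha xa : 0 < t -> c = t + st -> ha - a <= t -> a < c -> xa <= ha -> xa - c < t.
Proof. lia. Qed.
Lemma arith3 c t st a ha xa ya : c = t + st -> ha - a <= t -> a <= xa -> xa < c ->
  c <= ya -> ya <= ha -> ya - c <= xa - st.
Proof. lia. Qed.
Lemma arith4 c t st a ha xa ya : c = t + st -> ha - a <= t -> a <= xa -> xa < c ->
  c <= ya -> ya <= ha -> st <= a -> xa - st = ya - c -> ya = ha /\ ha - a = t.
Proof. lia. Qed.

Lemma build_decomp t p : 0 < t -> in_Gt t p ->
  exists R k s, [/\ p = build t R k s, k < size R,
                    all (fun x => x.1 < t) R & pairwise op_rel R].
Proof.
move=> t0 /and4P[/andP[Hpos HP] Hne H3 H4].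
case: p Hne Hpos HP H3 H4 => [|h p'] // _ Hpos HP.
rewrite /largest /smallest /=.
set a := (last h p').1.
move=> H3 H4.
set s := a %/ t.
set c := s.+1 * t.
have Ha1 : s * t <= a by apply: leq_divM.
have Ha2 : a < c by apply: ltn_ceil.
have Hc : c = t + s * t by rewrite /c mulSn.
have Hlow : forall x, x \in h :: p' -> a <= x.1 by move=> x Hx; apply: pw_last_le.
have Hup : forall x, x \in h :: p' -> x.1 <= h.1.
  move=> x; rewrite inE => /orP[/eqP->//|Hx].
  have H := pw_head_ge HP Hx; exact H.
have Hbar : forall x, x \in h :: p' -> x.1 = h.1 -> h.1 - a = t -> ~~ x.2.
  move=> x; rewrite inE => /orP[/eqP-> _ Ht|Hx Hxh Ht].
    by move/implyP: H4; apply; apply/eqP.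
  move: HP; rewrite pairwise_cons => /andP[/allP /(_ x Hx) /andP[_ H] _].
  by move/implyP: H; apply; rewrite Hxh.
have Hcdef : s.+1 * t = c by [].
have Hadef : (last h p').1 = a by [].
clearbody a s c.
set q := h :: p' in Hpos HP Hlow Hup Hbar *.
set k := count (fun x => c <= x.1) q.
have [Htop Hbot] := take_count_split c HP.
rewrite -/k in Htop Hbot.
have [Hrel Hpt Hpd] := pairwise_take_drop k HP.
have Hbot' : all (fun x => s * t <= x.1) (drop k q).
  apply/allP => x Hx; apply: leq_trans Ha1 _; apply: Hlow; exact: mem_drop Hx.
have Htop' : all (fun x => c <= x.1) (take k q) by [].
exists (map (unshiftp (s * t)) (drop k q) ++ map (unshiftp c) (take k q)), k, s.
have HsR : size (map (unshiftp (s * t)) (drop k q) ++ map (unshiftp c) (take k q)) = size q.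
  by rewrite size_cat !size_map addnC -size_cat cat_take_drop.
have Hsd : size (map (unshiftp (s * t)) (drop k q)) = size q - k by rewrite size_map size_drop.
split.
- rewrite /build HsR -Hsd drop_size_cat // take_size_cat //.
  by rewrite Hcdef shift_unshift_map // shift_unshift_map // cat_take_drop.
- rewrite HsR /k -[X in _ < X](count_predC (fun x => c <= x.1) q).
  rewrite -{1}[count _ q]addn0 ltn_add2l -has_count; apply/hasP.
  exists (last h p'); first exact: mem_last.
  by rewrite /= -ltnNge Hadef.
- rewrite all_cat !all_map; apply/andP; split; apply/allP => x Hx /=.
    move/allP: Hbot => /(_ x Hx); rewrite /unshiftp /=; exact: arith1 t0 Hc.
  have Hxq : x \in q := mem_take Hx.
  have := Hup x Hxq; rewrite /unshiftp /=; exact: arith2 t0 Hc H3 Ha2.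
- rewrite pairwise_cat; apply/and3P; split; last 2 first.
  + exact: pairwise_unshift.
  + exact: pairwise_unshift.
  apply/allrelP => x' y' /mapP[x Hx ->] /mapP[y Hy ->].
  have Hxq : x \in q := mem_drop Hx.
  have Hyq : y \in q := mem_take Hy.
  have Hx1 := Hlow x Hxq.
  have Hx2 : x.1 < c by move/allP: Hbot => /(_ x Hx).
  have Hy1 : c <= y.1 by move/allP: Htop => /(_ y Hy).
  have Hy2 := Hup y Hyq.
  have Hb := Hbar y Hyq.
  rewrite /op_rel /unshiftp /=.
  apply/andP; split; first exact: (arith3 Hc H3).
  apply/implyP => /eqP Heq.
  have [E1 E2] := arith4 Hc H3 Hx1 Hx2 Hy1 Hy2 Ha1 Heq.
  exact: Hb.
Qed.

Definition zeros (n : nat) (b : bool) : seq opart :=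
  if n is n'.+1 then (0, b) :: nseq n' (0, false) else [::].

Lemma size_zeros n b : size (zeros n b) = n.
Proof. by case: n => //= n; rewrite size_nseq. Qed.

Lemma n_over_zeros n b : n_over (zeros n b) = b && (0 < n).
Proof.
case: n => [|n]; rewrite /n_over /zeros; first by rewrite andbF.
by rewrite /= count_nseq /= ?mul0n ?addn0 andbT.
Qed.

Lemma filter_zeros n b : filter (fun x => x.1 != 0) (zeros n b) = [::].
Proof. by case: n => //= n; rewrite filter_nseq /= ?mul0n. Qed.

Lemma pairwise_zeros n b : pairwise op_rel (zeros n b).
Proof.
case: n => // n; rewrite /zeros pairwise_cons; apply/andP; split.
  by apply/allP => x /nseqP[-> _].
elim: n => // n IH; rewrite [nseq _ _]/= pairwise_cons IH andbT.
by apply/allP => x /nseqP[-> _].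
Qed.

Lemma n_over_build t R k s : n_over (build t R k s) = n_over R.
Proof.
rewrite /n_over /build count_cat !count_map addnC -count_cat cat_take_drop.
by apply: eq_count => -[a b].
Qed.

Lemma nseq_cat_inj t a b (X Y : seq opart) : all (fun x => x.1 != t) X -> all (fun x => x.1 != t) Y ->
  nseq a (t, false) ++ X = nseq b (t, false) ++ Y -> a = b /\ X = Y.
Proof.
elim: a b => [|a IH] [|b] //= HX HY.
- by move=> E; rewrite E /= eqxx in HX.
- by move=> E; rewrite -E /= eqxx in HY.
- by case=> /(IH b HX HY) [-> ->].
Qed.

Lemma split_zero (R : seq opart) : pairwise op_rel R ->
  R = filter (fun x => x.1 != 0) R ++ filter (fun x => x.1 == 0) R.
Proof.
elim: R => [|x R IH] // H.
have H' : pairwise op_rel R by move: H; rewrite pairwise_cons => /andP[].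
case: (eqVneq x.1 0) => Hx /=; last first.
  by rewrite Hx (negbTE Hx) /= -IH.
rewrite Hx /=.
have Hall : forall y, y \in R -> y.1 = 0.
  move=> y Hy; have := pw_head_ge H Hy; rewrite Hx; case: (y.1) => //.
rewrite (eq_in_filter (a2 := pred0)); last by move=> y /Hall /= ->.
rewrite filter_pred0 (eq_in_filter (a2 := predT)); last by move=> y /Hall /= ->.
by rewrite filter_predT.
Qed.

Lemma zeros_shape (Z : seq opart) : all (fun x => x.1 == 0) Z -> pairwise op_rel Z ->
  Z = zeros (size Z) (head (0, false) Z).2.
Proof.
case: Z => [|z Z] // /andP[/eqP z0 HZ]; rewrite pairwise_cons => /andP[Hz _].
case: z z0 Hz => a b /= -> Hz; congr (_ :: _).
apply/all_pred1P/allP => y Hy; move/allP: HZ => /(_ y Hy) /eqP y0.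
move/allP: Hz => /(_ y Hy); rewrite /op_rel y0 /= => Hb.
by case: y y0 Hb {Hy} => a' b' /= -> /=; case: b'.
Qed.

Lemma mu_decomp t (mu : seq opart) : 0 < t -> in_Pt t mu ->
  [/\ mu = nseq (mult_t t mu) (t, false) ++ drop (mult_t t mu) mu,
      all (fun x => 0 < x.1) (drop (mult_t t mu) mu),
      all (fun x => x.1 < t) (drop (mult_t t mu) mu) &
      pairwise op_rel (drop (mult_t t mu) mu)].
Proof.
move=> t0 /and4P[/andP[Hpos HP] _ /allP Hle /allP Hbar].
have Hc : count (fun x => t <= x.1) mu = mult_t t mu.
  rewrite /mult_t; apply: eq_in_count => x /Hle Hx /=.
  by rewrite eqn_leq Hx.
have [Htop Hbot] := take_count_split t HP.
rewrite Hc in Htop Hbot.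
have [_ _ Hpd] := pairwise_take_drop (mult_t t mu) HP.
split => //.
- have Hs : size (take (mult_t t mu) mu) = mult_t t mu.
    rewrite size_take; case: ifP => // /negbT; rewrite -leqNgt => H.
    by apply/eqP; rewrite eqn_leq H /mult_t count_size.
  rewrite -{1}(cat_take_drop (mult_t t mu) mu); congr (_ ++ _).
  rewrite -{2}Hs; apply/all_pred1P/allP => x Hx.
  have Hxm : x \in mu := mem_take Hx.
  have E : x.1 = t by apply/eqP; rewrite eqn_leq Hle //; move/allP: Htop => /(_ x Hx).
  move: (Hbar x Hxm); rewrite E eqxx /=.
  by case: x E {Hx Hxm} => a b /= -> /negbTE ->.
- by apply/allP => x Hx; move/allP: Hpos; apply; exact: mem_drop Hx.
Qed.

Lemma n_over_cat a b : n_over (a ++ b) = n_over a + n_over b.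
Proof. exact: count_cat. Qed.

Definition nuof t (mu : seq opart) := drop (mult_t t mu) mu.
Definition fpre t mu N b :=
  build t (nuof t mu ++ zeros (N - size (nuof t mu)) b) (mult_t t mu %% N) (mult_t t mu %/ N).

Lemma size_fpre t mu N b : size (nuof t mu) <= N -> size (fpre t mu N b) = N.
Proof. by move=> H; rewrite /fpre size_build size_cat size_zeros subnKC. Qed.

Lemma n_over_fpre t mu N b :
  n_over (fpre t mu N b) = n_over (nuof t mu) + (b && (size (nuof t mu) < N)).
Proof. by rewrite /fpre n_over_build n_over_cat n_over_zeros subn_gt0. Qed.

Lemma fpre_r t mu b : fpre t mu (size (nuof t mu)) b = fpre t mu (size (nuof t mu)) false.
Proof. by rewrite /fpre subnn. Qed.

Lemma fpre_good t mu N b : 0 < t -> in_Pt t mu -> 0 < N -> size (nuof t mu) <= N ->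
  N <= size (nuof t mu) + mult_t t mu -> in_Gt t (fpre t mu N b) /\ phi t (fpre t mu N b) = mu.
Proof.
move=> t0 Hmu N0 HrN HNm.
have [Emu Hpos Hlt Hpw] := mu_decomp t0 Hmu.
rewrite -/(nuof t mu) in Emu Hpos Hlt Hpw HrN HNm *.
rewrite /fpre.
move: Emu Hpos Hlt Hpw HrN HNm; move: (nuof t mu) (mult_t t mu) => nu m Emu Hpos Hlt Hpw HrN HNm.
set R := nu ++ zeros (N - size nu) b.
have HsR : size R = N by rewrite size_cat size_zeros subnKC.
have kN : m %% N < size R by rewrite HsR ltn_pmod.
have HRt : all (fun x => x.1 < t) R.
  rewrite all_cat Hlt /=; case: (N - size nu) => //= n.
  by rewrite t0 /=; apply/allP => x /nseqP[-> _].
have HRp : pairwise op_rel R.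
  rewrite pairwise_cat Hpw pairwise_zeros !andbT.
  apply/allrelP => x y Hx Hy.
  have : y.1 == 0.
    move: Hy; case: (N - size nu) => //= n; rewrite inE => /orP[/eqP->//|/nseqP[-> _]] //.
  move/allP: Hpos => /(_ x Hx); case: x {Hx} => a c; case: y {Hy} => a' c' /= Ha /eqP ->.
  by rewrite /op_rel /= (gtn_eqF Ha).
split.
  apply: inGt_build => //.
  case: (posnP (m %/ N)) => [s0|//] /=.

  have mN : m < N by rewrite (divn_eq m N) s0 mul0n add0n ltn_pmod.
  have Ek : m %% N = m by rewrite modn_small.
  rewrite HsR Ek takel_cat; last by rewrite leq_subLR addnC.
  by apply/allP => x /mem_take; move/allP: Hpos; apply.
rewrite phi_build // HsR -divn_eq /R filter_cat filter_zeros cats0 Emu.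
congr (_ ++ _).
by apply/all_filterP; apply/allP => x Hx; rewrite -lt0n; move/allP: Hpos; apply.
Qed.

Lemma arith5 N m r s k : s * N + k = m -> r + m < N -> s = 0 /\ k = m.
Proof. case: s => [|s]; first by rewrite mul0n add0n. rewrite mulSn => E; lia. Qed.

Lemma arith6 r m N : r + m < N -> r < N - m.
Proof. lia. Qed.

Lemma fpre_complete t mu p : 0 < t -> in_Pt t mu -> in_Gt t p -> phi t p = mu ->
  exists b, [/\ p = fpre t mu (size p) b, 0 < size p, size (nuof t mu) <= size p &
                size p <= size (nuof t mu) + mult_t t mu].
Proof.
move=> t0 Hmu Hp Hphi0.
have Hposp : all (fun x => 0 < x.1) p by case/and4P: Hp => /andP[].
have [R [k [s [Ep kN HRt HRp]]]] := build_decomp t0 Hp.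
have Hphi := phi_build s t0 kN HRt; rewrite -Ep Hphi0 in Hphi.
have [Emu Hpos Hlt Hpw] := mu_decomp t0 Hmu.
rewrite -/(nuof t mu) in Emu Hpos Hlt Hpw *.
rewrite /fpre.
move: Emu Hpos Hlt Hpw Hphi; move: (nuof t mu) (mult_t t mu) => nu m Emu Hpos Hlt Hpw Hphi.
rewrite Emu in Hphi.
have [Em Enu] : s * size R + k = m /\ filter (fun x => x.1 != 0) R = nu.
  apply: (nseq_cat_inj _ _ (esym Hphi)).
  - apply/allP => x; rewrite mem_filter => /andP[_ Hx].
    by move/allP: HRt => /(_ x Hx) /ltn_eqF ->.
  - by apply/allP => x Hx; move/allP: Hlt => /(_ x Hx) /ltn_eqF ->.
have ER := split_zero HRp; rewrite Enu in ER.
set Z := filter (fun x => x.1 == 0) R in ER.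
have HZ : Z = zeros (size Z) (head (0, false) Z).2.
  apply: zeros_shape; first by apply/allP => x; rewrite mem_filter => /andP[].
  exact: pairwise_filter.
set b := (head (0, false) Z).2 in HZ.
have HsZ : size R = size nu + size Z by rewrite {1}ER size_cat.
have Hsp : size p = size R by rewrite Ep size_build.
have [Es Ek] := divmod_uniq s kN; rewrite Em in Es Ek.
exists b; rewrite Hsp.
have E1 : size R - size nu = size Z by rewrite HsZ addKn.
split.
- by rewrite Ep Es Ek E1 -HZ -ER.
- exact: leq_ltn_trans (leq0n k) kN.
- by rewrite HsZ leq_addr.
rewrite leqNgt; apply/negP => HN.
have [s0 km] := arith5 Em HN.
have HZpos : 0 < size Z.
  move: HN; rewrite HsZ ltn_add2l => H; exact: leq_ltn_trans (leq0n m) H.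
have Hj : size nu < size R - k by rewrite km; apply: arith6.
have Hmem : (0, b) \in take (size R - k) R.
  rewrite {2}ER take_cat ifN; last by rewrite -leqNgt ltnW.
  rewrite mem_cat; apply/orP; right.
  move: Hj; rewrite -subn_gt0; case: (size R - k - size nu) => // j _.
  rewrite HZ; case: (size Z) HZpos => // n _ /=.
  by rewrite mem_head.
move/allP: Hposp => /(_ (shiftp (s * t) (0, b))).
by rewrite Ep mem_cat (map_f _ Hmem) orbT s0 /= => /(_ isT).
Qed.

Lemma so_build_zeros t N b k s : k < N -> smallest_overlined (build t (zeros N b) k s) = b.
Proof.
move=> kN.
have kN' : k < size (zeros N b) by rewrite size_zeros.
rewrite /smallest_overlined.
case: b kN'.
- move=> kN'.
  have [y Hy Hsm] := smallest_build t s kN'.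
  have y0 : y.1 = 0.
    move: (mem_take Hy); case: (N) => //= n; rewrite inE => /orP[/eqP->//|/nseqP[-> _]] //.
  have Hmem : (0, true) \in take (size (zeros N true) - k) (zeros N true).
    rewrite size_zeros; have := kN; rewrite -subn_gt0; case: (N - k) => // j _.
    by case: (N) kN => // n _ /=; rewrite mem_head.
  apply/hasP; exists (shiftp (s * t) (0, true)).
    by rewrite /build mem_cat (map_f _ Hmem) orbT.
  by rewrite Hsm y0 /= eqxx.
- move=> _; apply/negbTE; apply/negP => /hasP[x Hx /andP[_ Hx2]].
  have : 0 < n_over (build t (zeros N false) k s).
    by rewrite /n_over -has_count; apply/hasP; exists x.
  by rewrite n_over_build n_over_zeros.
Qed.

Lemma count_const (T : eqType) (a : pred T) (s : seq T) (c : bool) :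
  (forall x, x \in s -> a x = c) -> count a s = c * size s.
Proof.
move=> H; rewrite (eq_in_count (a2 := fun _ => c)) //.
by case: c {H}; [rewrite count_predT mul1n | rewrite count_pred0].
Qed.

Lemma fpre_inj t mu N N' b b' : size (nuof t mu) <= N -> size (nuof t mu) <= N' ->
  fpre t mu N b = fpre t mu N' b' -> N = N' /\ (size (nuof t mu) < N -> b = b').
Proof.
move=> HN HN' E.
have EN : N = N' by rewrite -(size_fpre b HN) -(size_fpre b' HN') E.
split => // Hr.
have := congr1 n_over E; rewrite !n_over_fpre -EN Hr !andbT => /eqP.
by rewrite eqn_add2l; case: (b) ; case: (b').
Qed.

Unset Implicit Arguments.
Set Strict Implicit.

Theorem mainTheorem5 (t : nat) (mu : seq opart) :
  0 < t -> in_Pt t mu ->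
  exists L : seq (seq opart),
    uniq L /\ (forall p, p \in L <-> (in_Gt t p /\ phi t p = mu)) /\
    (size mu = mult_t t mu ->
       [/\ size L = 2 * mult_t t mu,
           count (fun p => n_over p == 0) L = mult_t t mu &
           count smallest_overlined L = mult_t t mu]) /\
    (size mu > mult_t t mu ->
       [/\ size L = 2 * mult_t t mu + 1,
           count (fun p => n_over p == n_over mu) L = mult_t t mu + 1 &
           count (fun p => n_over p == (n_over mu).+1) L = mult_t t mu]).
Proof.
move=> t0 Hmu.
have [Emu Hpos Hlt Hpw] := mu_decomp t0 Hmu.
rewrite -/(nuof t mu) in Emu Hpos Hlt Hpw.
have Hsmu : size mu = mult_t t mu + size (nuof t mu) by rewrite {1}Emu size_cat size_nseq.
have Hnmu : n_over mu = n_over (nuof t mu).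
  by rewrite {1}Emu n_over_cat /n_over count_nseq /= mul0n.
set m := mult_t t mu in Emu Hsmu *.
set nu := nuof t mu in Emu Hpos Hlt Hpw Hsmu Hnmu *.
set r := size nu in Hsmu *.
set I := iota r.+1 m.
have HI : forall N, N \in I -> [/\ r < N, N <= r + m & 0 < N].
  move=> N; rewrite mem_iota => /andP[H1 H2]; split => //.
  exact: leq_ltn_trans (leq0n r) H1.
have HIr : forall N, N \in I -> r <= N by move=> N /HI[/ltnW].
set A := if 0 < r then [:: fpre t mu r false] else [::].
exists (A ++ map (fun N => fpre t mu N false) I ++ map (fun N => fpre t mu N true) I).
split.
  rewrite cat_uniq; apply/and3P; split.
  - by rewrite /A; case: ifP.
  - apply/hasP => -[p]; rewrite mem_cat => /orP[] /mapP[N HN ->];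
      rewrite /A; case: ifP => // _; rewrite inE => /eqP /(fpre_inj (HIr N HN) (leqnn _)) [E _];
      have [H _ _] := HI N HN; by move: H; rewrite -/nu -/r E ltnn.
  rewrite cat_uniq; apply/and3P; split.
  - by rewrite map_inj_in_uniq ?iota_uniq // => N N' HN HN' /(fpre_inj (HIr N HN) (HIr N' HN')) [].
  - apply/hasP => -[p] /mapP[N HN ->] /mapP[N' HN' /(fpre_inj (HIr N HN) (HIr N' HN')) [_]].
    by have [H _ _] := HI N HN; move=> /(_ H).
  - by rewrite map_inj_in_uniq ?iota_uniq // => N N' HN HN' /(fpre_inj (HIr N HN) (HIr N' HN')) [].
have Hn : forall N b, N \in I -> n_over (fpre t mu N b) = n_over nu + b.
  by move=> N b HN; rewrite n_over_fpre; have [-> _ _] := HI N HN; rewrite andbT.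
split.
  move=> p; split.
    rewrite !mem_cat => /or3P[|/mapP[N HN ->]|/mapP[N HN ->]].
    - rewrite /A; case: ifP => // r0; rewrite inE => /eqP ->.
      by apply: fpre_good => //; rewrite leq_addr.
    - by have [H1 H2 H3] := HI N HN; apply: fpre_good => //; exact: ltnW.
    - by have [H1 H2 H3] := HI N HN; apply: fpre_good => //; exact: ltnW.
  case=> Hp Hphi.
  have [b [Ep HN0 HrN HNm]] := fpre_complete t0 Hmu Hp Hphi.
  rewrite -/nu -/r -/m in Ep HrN HNm.
  rewrite !mem_cat; case: (ltngtP r (size p)) => [Hlt'||Heq].
  - have HI' : size p \in I by rewrite mem_iota Hlt' /= addSn ltnS.
    by case: (b) Ep => Ep; rewrite Ep (map_f _ HI') ?orbT.
  - by rewrite ltnNge HrN.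
  - have Ep' : p = fpre t mu r false by rewrite Ep -Heq fpre_r.
    have r0 : 0 < r by rewrite Heq.
    by rewrite /A r0 inE Ep' eqxx.
split.
  move=> Hs.
  have r0 : r = 0 by move: Hs; rewrite Hsmu -{2}[m]addn0 => /eqP; rewrite eqn_add2l => /eqP.
  have nu0 : nu = [::] by apply: size0nil.
  rewrite /A r0 /= size_cat !size_map size_iota !count_cat !count_map /=.
  split.
  - by rewrite mul2n -addnn.
  - rewrite (@count_const _ _ _ true) => [|N HN]; last by rewrite /= Hn // nu0.
    rewrite (@count_const _ _ _ false) => [|N HN]; last by rewrite /= Hn // nu0.
    by rewrite size_iota mul1n mul0n addn0.
  - have Hso : forall N b, N \in I -> smallest_overlined (fpre t mu N b) = b.
      move=> N b HN; have [_ _ N0] := HI N HN.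
      by rewrite /fpre -/nu nu0 /= subn0 so_build_zeros // ltn_pmod.
    rewrite (@count_const _ _ _ false) => [|N HN]; last by apply: Hso.
    rewrite (@count_const _ _ _ true) => [|N HN]; last by apply: Hso.
    by rewrite size_iota mul1n mul0n.
move=> Hs.
have r0 : 0 < r by move: Hs; rewrite Hsmu -{1}[m]addn0 ltn_add2l.
rewrite /A r0 /= size_cat !size_map size_iota !count_cat !count_map /=.
split.
- by rewrite mul2n -addnn addnC.
- rewrite (@count_const _ _ _ true) => [|N HN]; last by rewrite /= Hn // Hnmu addn0 eqxx.
  rewrite (@count_const _ _ _ false) => [|N HN]; last by rewrite /= Hn // Hnmu addn1 (gtn_eqF (ltnSn _)).
  rewrite n_over_fpre ltnn andbF addn0 Hnmu eqxx.
  by rewrite size_iota mul1n mul0n addn0 add1n addn1.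
- rewrite (@count_const _ _ _ false) => [|N HN]; last by rewrite /= Hn // Hnmu addn0 (ltn_eqF (ltnSn _)).
  rewrite (@count_const _ _ _ true) => [|N HN]; last by rewrite /= Hn // Hnmu addn1 eqxx.
  rewrite n_over_fpre ltnn andbF addn0 Hnmu (ltn_eqF (ltnSn _)).
  by rewrite size_iota mul1n mul0n.
Qed.
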